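(* Every surjective closed map and every surjective open map in $\mathbf{CLS}$ is an effective descent morphism in $\mathbf{CLS}$.
   Context: A closure space is a pair $(A,\mathcal{C}_A)$ where $A$ is a set and $\mathcal{C}_A$ is a set of subsets of $A$ closed under arbitrary intersections (so $A\in\mathcal{C}_A$); elements of $\mathcal{C}_A$ are called closed. $\mathbf{CLS}$ has closure spaces as objects and, as morphisms $\alpha:A\to B$, maps with $\alpha^{-1}(B')\in\mathcal{C}_A$ for all $B'\in\mathcal{C}_B$. A morphism $p:E\to B$ is closed if $p(Y)\in\mathcal{C}_B$ for all $Y\in\mathcal{C}_E$, and open if $B\setminus p(Y)\in\mathcal{C}_B$ whenever $E\setminus Y\in\mathcal{C}_E$. For a morphism $p:E\to B$ in a category with pullbacks, a descent data for $p$ is a triple $(C,\gamma,\xi)$ with $\gamma:C\to E$, $\xi:E\times_BC\to C$ (pullback of $p$ and $p\gamma$, projections $\pi_1,\pi_2$) such that $\gamma\xi=\pi_1$, $\xi\langle\gamma,1_C\rangle=1_C$, $\xi\circ(E\times_B\xi)=\xi\circ(E\times_B\pi_2)$; morphisms are maps $f:C\to C'$ with $\gamma'f=\gamma$, $f\xi=\xi'(E\times_Bf)$. The comparison functor $K^p:(\mathbf{C}\downarrow B)\to\mathrm{Des}(p)$ is $K^p(A,\alpha)=(E\times_BA,\pi_1,E\times_B\pi_2)$, and $p$ is an effective descent morphism if $K^p$ is an equivalence of categories. *)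

(* Defs.v *)
From Stdlib Require Import FunctionalExtensionality PropExtensionality ProofIrrelevance.

Record CLS := {
  carrier :> Type;
  closed : (carrier -> Prop) -> Prop;
  closed_inter : forall F : (carrier -> Prop) -> Prop,
      (forall S, F S -> closed S) -> closed (fun x => forall S, F S -> S x) }.

Definition continuous {A B : CLS} (f : A -> B) : Prop :=
  forall S : B -> Prop, closed B S -> closed A (fun x => S (f x)).

Record hom (A B : CLS) := Hom { hfun :> A -> B; hcont : continuous hfun }.
Arguments Hom {A B}. Arguments hfun {A B}. Arguments hcont {A B}.

Definition surjective {E B : CLS} (p : hom E B) : Prop :=
  forall b : B, exists e : E, p e = b.

Definition closed_map {E B : CLS} (p : hom E B) : Prop :=
  forall Y : E -> Prop, closed E Y -> closed B (fun b => exists e, Y e /\ p e = b).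

Definition open_map {E B : CLS} (p : hom E B) : Prop :=
  forall Y : E -> Prop, closed E (fun e => ~ Y e) ->
    closed B (fun b => ~ exists e, Y e /\ p e = b).

Lemma closed_ext (A : CLS) (S T : A -> Prop) :
  (forall x, S x <-> T x) -> closed A S -> closed A T.
Proof.
  intros H HS. replace T with S; auto.
  apply functional_extensionality; intro x; apply propositional_extensionality; auto.
Qed.

Lemma closed_and (A : CLS) (S T : A -> Prop) :
  closed A S -> closed A T -> closed A (fun x => S x /\ T x).
Proof.
  intros HS HT.
  apply closed_ext with (fun x => forall U, (U = S \/ U = T) -> U x).
  - intro x; split.
    + intro H; split; apply H; auto.
    + intros [H1 H2] U [-> | ->]; auto.
  - apply closed_inter. intros U [-> | ->]; auto.
Qed.

Lemma cont_id (A : CLS) : continuous (fun x : A => x).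
Proof. intros S HS; exact HS. Qed.

Lemma cont_comp {A B C : CLS} (f : A -> B) (g : B -> C) :
  continuous f -> continuous g -> continuous (fun x => g (f x)).
Proof. intros Hf Hg S HS. exact (Hf _ (Hg S HS)). Qed.

Definition hid (A : CLS) : hom A A := Hom (fun x => x) (cont_id A).
Definition hcomp {A B C : CLS} (g : hom B C) (f : hom A B) : hom A C :=
  Hom (fun x => g (f x)) (cont_comp f g (hcont f) (hcont g)).

(** * Pullbacks in CLS
   X x_B Y = {(x,y) | f x = g y} with the initial closure structure w.r.t.
   the two projections: a set is closed iff it is the intersection of all
   sets pi1^-1(U) /\ pi2^-1(V) (U, V closed) containing it. *)
Section Pullback.
Context {X Y B : CLS} (f : X -> B) (g : Y -> B).

Definition pb_carrier : Type := { xy : X * Y | f (fst xy) = g (snd xy) }.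

Definition pb_closed (S : pb_carrier -> Prop) : Prop :=
  forall z : pb_carrier,
    (forall (U : X -> Prop) (V : Y -> Prop), closed X U -> closed Y V ->
       (forall w, S w -> U (fst (proj1_sig w)) /\ V (snd (proj1_sig w))) ->
       U (fst (proj1_sig z)) /\ V (snd (proj1_sig z))) ->
    S z.

Lemma pb_closed_inter : forall F : (pb_carrier -> Prop) -> Prop,
  (forall S, F S -> pb_closed S) -> pb_closed (fun x => forall S, F S -> S x).
Proof.
  intros F HF z Hz S FS. apply (HF S FS z).
  intros U V HU HV HS. apply Hz; auto.
  intros w Hw. apply HS. apply Hw. exact FS.
Qed.

Definition PB : CLS := {| carrier := pb_carrier; closed := pb_closed;
                          closed_inter := pb_closed_inter |}.

Definition pbpt (x : X) (y : Y) (H : f x = g y) : PB :=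
  exist (fun xy : X * Y => f (fst xy) = g (snd xy)) (x, y) H.

Lemma pbpt_eq (x x' : X) (y y' : Y) (H : f x = g y) (H' : f x' = g y') :
  x = x' -> y = y' -> pbpt x y H = pbpt x' y' H'.
Proof.
  intros <- <-. unfold pbpt. f_equal. apply proof_irrelevance.
Qed.

Lemma full_closed (A : CLS) : closed A (fun x => forall S : A -> Prop, False -> S x).
Proof. apply closed_inter. intros S []. Qed.

Lemma cont_pi1 : continuous (fun z : PB => fst (proj1_sig z)).
Proof.
  intros U HU z Hz.
  apply (Hz U (fun y => forall S : Y -> Prop, False -> S y) HU (full_closed Y)).
  intros w Hw; split; [exact Hw | intros S []].
Qed.

Lemma cont_pi2 : continuous (fun z : PB => snd (proj1_sig z)).
Proof.
  intros V HV z Hz.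
  apply (Hz (fun x => forall S : X -> Prop, False -> S x) V (full_closed X) HV).
  intros w Hw; split; [intros S [] | exact Hw].
Qed.

Definition pi1 : hom PB X := Hom (fun z : PB => fst (proj1_sig z)) cont_pi1.
Definition pi2 : hom PB Y := Hom (fun z : PB => snd (proj1_sig z)) cont_pi2.

Lemma pb_pair_cont (Z : CLS) (h : Z -> PB) :
  continuous (fun z => fst (proj1_sig (h z))) ->
  continuous (fun z => snd (proj1_sig (h z))) -> continuous h.
Proof.
  intros Ha Hb S HS.
  apply closed_ext with (fun z => forall T : Z -> Prop,
    (exists U V, closed X U /\ closed Y V /\
       (forall w, S w -> U (fst (proj1_sig w)) /\ V (snd (proj1_sig w))) /\
       T = (fun z => U (fst (proj1_sig (h z))) /\ V (snd (proj1_sig (h z))))) -> T z).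
  - intro z; split.
    + intro H. apply HS. intros U V HU HV HSUV.
      apply (H (fun z => U (fst (proj1_sig (h z))) /\ V (snd (proj1_sig (h z))))).
      exists U, V; split; [exact HU|split; [exact HV|split; [exact HSUV|reflexivity]]].
    + intros Hz T [U [V [HU [HV [HSUV ->]]]]]. apply HSUV; exact Hz.
  - apply closed_inter. intros T [U [V [HU [HV [_ ->]]]]].
    apply closed_and; [apply (Ha U HU) | apply (Hb V HV)].
Qed.

End Pullback.

(** * A minimal notion of category (hom-equality is a setoid) and
      equivalence of categories (functor with a quasi-inverse functor and
      natural isomorphisms 1 ~ GF, FG ~ 1). *)
Record Cat := {
  Ob : Type;
  Mor : Ob -> Ob -> Type;
  MEq : forall a b, Mor a b -> Mor a b -> Prop;
  Mid : forall a, Mor a a;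
  Mcomp : forall x y z, Mor y z -> Mor x y -> Mor x z }.
Arguments MEq {c a b}. Arguments Mid {c}. Arguments Mcomp {c x y z}.

Record Functor (C D : Cat) := {
  F0 : Ob C -> Ob D;
  F1 : forall a b, Mor C a b -> Mor D (F0 a) (F0 b) }.
Arguments F0 {C D}. Arguments F1 {C D} _ {a b}.

Definition is_functor {C D : Cat} (F : Functor C D) : Prop :=
  (forall a b (f g : Mor C a b), MEq f g -> MEq (F1 F f) (F1 F g)) /\
  (forall a, MEq (F1 F (Mid a)) (Mid (F0 F a))) /\
  (forall a b c (f : Mor C a b) (g : Mor C b c),
      MEq (F1 F (Mcomp g f)) (Mcomp (F1 F g) (F1 F f))).

Definition is_equivalence {C D : Cat} (F : Functor C D) : Prop :=
  is_functor F /\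
  exists G : Functor D C, is_functor G /\
   (exists (eta : forall a, Mor C a (F0 G (F0 F a)))
           (eta' : forall a, Mor C (F0 G (F0 F a)) a),
      (forall a, MEq (Mcomp (eta' a) (eta a)) (Mid a)) /\
      (forall a, MEq (Mcomp (eta a) (eta' a)) (Mid _)) /\
      (forall a b (f : Mor C a b),
          MEq (Mcomp (F1 G (F1 F f)) (eta a)) (Mcomp (eta b) f))) /\
   (exists (eps : forall d, Mor D (F0 F (F0 G d)) d)
           (eps' : forall d, Mor D d (F0 F (F0 G d))),
      (forall d, MEq (Mcomp (eps' d) (eps d)) (Mid _)) /\
      (forall d, MEq (Mcomp (eps d) (eps' d)) (Mid d)) /\
      (forall d d' (g : Mor D d d'),
          MEq (Mcomp g (eps d)) (Mcomp (eps d') (F1 F (F1 G g))))).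

Section Slice.
Context (B : CLS).

Record SliceObj := { sdom : CLS; smap : hom sdom B }.
Record SliceHom (X Y : SliceObj) := {
  shom : hom (sdom X) (sdom Y);
  scomm : forall x, smap Y (shom x) = smap X x }.
Arguments shom {X Y}. Arguments scomm {X Y}.

Definition slice_id (X : SliceObj) : SliceHom X X :=
  {| shom := hid (sdom X); scomm := fun x => eq_refl |}.
Definition slice_comp (X Y Z : SliceObj) (g : SliceHom Y Z) (f : SliceHom X Y)
  : SliceHom X Z :=
  {| shom := hcomp (shom g) (shom f);
     scomm := fun x => eq_trans (scomm g (shom f x)) (scomm f x) |}.

Definition SliceCat : Cat := {|
  Ob := SliceObj; Mor := SliceHom;
  MEq := fun X Y f g => forall x, shom f x = shom g x;
  Mid := slice_id; Mcomp := slice_comp |}.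
End Slice.
Arguments shom {B X Y}. Arguments scomm {B X Y}.
Arguments sdom {B}. Arguments smap {B}.

Section Descent.
Context {E B : CLS} (p : hom E B).

Definition EC {C : CLS} (gam : hom C E) : CLS := PB p (fun c => p (gam c)).

Record DesObj := {
  dC : CLS;
  dgam : hom dC E;
  dxi : hom (EC dgam) dC;
  d_ax1 : forall z : EC dgam, dgam (dxi z) = fst (proj1_sig z);
  d_ax2 : forall c : dC, dxi (pbpt p (fun c => p (dgam c)) (dgam c) c eq_refl) = c;
  (* xi (E x_B xi) = xi (E x_B pi2), evaluated at (e', (e, c)) in
     E x_B (E x_B C), where p e' = p e and p e = p (gamma c) *)
  d_ax3 : forall (e' e : E) (c : dC) (H1 : p e' = p e) (H2 : p e = p (dgam c)),
      dxi (pbpt p (fun c => p (dgam c)) e' (dxi (pbpt p (fun c => p (dgam c)) e c H2))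
             (eq_trans H1 (eq_sym (f_equal p (d_ax1 (pbpt p (fun c => p (dgam c)) e c H2))))))
      = dxi (pbpt p (fun c => p (dgam c)) e' c (eq_trans H1 H2)) }.

Record DesHom (D D' : DesObj) := {
  dh : hom (dC D) (dC D');
  dh_gam : forall c, dgam D' (dh c) = dgam D c;
  dh_xi : forall (e : E) (c : dC D) (H : p e = p (dgam D c)),
      dh (dxi D (pbpt p (fun c => p (dgam D c)) e c H))
      = dxi D' (pbpt p (fun c => p (dgam D' c)) e (dh c)
                  (eq_trans H (eq_sym (f_equal p (dh_gam c))))) }.
Arguments dh {D D'}. Arguments dh_gam {D D'}. Arguments dh_xi {D D'}.

Lemma des_id_xi (D : DesObj) (e : E) (c : dC D) (H : p e = p (dgam D c)) :
  hid (dC D) (dxi D (pbpt p (fun c => p (dgam D c)) e c H))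
  = dxi D (pbpt p (fun c => p (dgam D c)) e (hid (dC D) c)
             (eq_trans H (eq_sym (f_equal p (eq_refl (dgam D c)))))).
Proof. simpl. f_equal; try (apply pbpt_eq; reflexivity). Qed.

Definition des_id (D : DesObj) : DesHom D D :=
  {| dh := hid (dC D); dh_gam := fun c => eq_refl; dh_xi := des_id_xi D |}.

Section Comp.
Context (D1 D2 D3 : DesObj) (g : DesHom D2 D3) (f : DesHom D1 D2).

Lemma des_comp_gam (c : dC D1) :
  dgam D3 (hcomp (dh g) (dh f) c) = dgam D1 c.
Proof. exact (eq_trans (dh_gam g (dh f c)) (dh_gam f c)). Defined.

Lemma des_comp_xi (e : E) (c : dC D1) (H : p e = p (dgam D1 c)) :
  hcomp (dh g) (dh f) (dxi D1 (pbpt p (fun c => p (dgam D1 c)) e c H))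
  = dxi D3 (pbpt p (fun c => p (dgam D3 c)) e (hcomp (dh g) (dh f) c)
              (eq_trans H (eq_sym (f_equal p (des_comp_gam c))))).
Proof.
  simpl. rewrite (dh_xi f). rewrite (dh_xi g). f_equal. apply pbpt_eq; reflexivity.
Qed.

Definition des_comp : DesHom D1 D3 :=
  {| dh := hcomp (dh g) (dh f); dh_gam := des_comp_gam; dh_xi := des_comp_xi |}.
End Comp.

Definition DesCat : Cat := {|
  Ob := DesObj; Mor := DesHom;
  MEq := fun D D' f g => forall c, dh f c = dh g c;
  Mid := des_id; Mcomp := des_comp |}.

Section K.
Context (X : SliceObj B).
Let A := sdom X.
Let al := smap X.

(* K^p(A, alpha) = (E x_B A, pi1, E x_B pi2) *)
Definition K_C : CLS := PB p al.
Definition K_gam : hom K_C E := pi1 p al.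

Definition K_xi_fun (w : EC K_gam) : K_C :=
  pbpt p al (fst (proj1_sig w)) (snd (proj1_sig (snd (proj1_sig w))))
       (eq_trans (proj2_sig w) (proj2_sig (snd (proj1_sig w)))).

Lemma K_xi_cont : continuous K_xi_fun.
Proof.
  apply pb_pair_cont.
  - exact (cont_pi1 p (fun c => p (K_gam c))).
  - exact (cont_comp _ _ (cont_pi2 p (fun c => p (K_gam c))) (cont_pi2 p al)).
Qed.

Definition K_xi : hom (EC K_gam) K_C := Hom K_xi_fun K_xi_cont.

Lemma K_ax1 : forall z : EC K_gam, K_gam (K_xi z) = fst (proj1_sig z).
Proof. reflexivity. Qed.

Lemma K_ax2 : forall c : K_C,
  K_xi (pbpt p (fun c => p (K_gam c)) (K_gam c) c eq_refl) = c.
Proof.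
  intros [[e a] H]. simpl. unfold K_xi_fun. simpl.
  unfold pbpt. f_equal. apply proof_irrelevance.
Qed.

Lemma K_ax3 : forall (e' e : E) (c : K_C) (H1 : p e' = p e) (H2 : p e = p (K_gam c)),
  K_xi (pbpt p (fun c => p (K_gam c)) e' (K_xi (pbpt p (fun c => p (K_gam c)) e c H2))
         (eq_trans H1 (eq_sym (f_equal p (K_ax1 (pbpt p (fun c => p (K_gam c)) e c H2))))))
  = K_xi (pbpt p (fun c => p (K_gam c)) e' c (eq_trans H1 H2)).
Proof.
  intros. simpl. unfold K_xi_fun. apply pbpt_eq; reflexivity.
Qed.

Definition K_obj : DesObj :=
  {| dC := K_C; dgam := K_gam; dxi := K_xi;
     d_ax1 := K_ax1; d_ax2 := K_ax2; d_ax3 := K_ax3 |}.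
End K.

Section Kmor.
Context (X Y : SliceObj B) (f : SliceHom B X Y).

Definition K_mor_fun (z : K_C X) : K_C Y :=
  pbpt p (smap Y) (fst (proj1_sig z)) (shom f (snd (proj1_sig z)))
       (eq_trans (proj2_sig z) (eq_sym (scomm f (snd (proj1_sig z))))).

Lemma K_mor_cont : continuous K_mor_fun.
Proof.
  apply pb_pair_cont.
  - exact (cont_pi1 p (smap X)).
  - exact (cont_comp _ _ (cont_pi2 p (smap X)) (hcont (shom f))).
Qed.

Definition K_mor_hom : hom (K_C X) (K_C Y) := Hom K_mor_fun K_mor_cont.

Lemma K_mor_gam : forall c, K_gam Y (K_mor_hom c) = K_gam X c.
Proof. reflexivity. Qed.

Lemma K_mor_xi : forall (e : E) (c : K_C X) (H : p e = p (K_gam X c)),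
  K_mor_hom (K_xi X (pbpt p (fun c => p (K_gam X c)) e c H))
  = K_xi Y (pbpt p (fun c => p (K_gam Y c)) e (K_mor_hom c)
              (eq_trans H (eq_sym (f_equal p (K_mor_gam c))))).
Proof. intros. simpl. unfold K_mor_fun, K_xi_fun. apply pbpt_eq; reflexivity. Qed.

Definition K_mor : DesHom (K_obj X) (K_obj Y) :=
  @Build_DesHom (K_obj X) (K_obj Y) K_mor_hom K_mor_gam K_mor_xi.
End Kmor.

Definition Kp : Functor (SliceCat B) DesCat :=
  @Build_Functor (SliceCat B) DesCat K_obj K_mor.

Definition effective_descent : Prop := is_equivalence Kp.

End Descent.

(* Main.v *)
Require Import Defs.
From Stdlib Require Import FunctionalExtensionality PropExtensionality ProofIrrelevance Classical IndefiniteDescription.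

Lemma sig_eq {T : Type} {P : T -> Prop} (x y : sig P) : proj1_sig x = proj1_sig y -> x = y.
Proof. destruct x, y; simpl; intros ->; f_equal; apply proof_irrelevance. Qed.

Lemma pb_ext {X Y B : CLS} (f : X -> B) (g : Y -> B) (z z' : PB f g) :
  fst (proj1_sig z) = fst (proj1_sig z') -> snd (proj1_sig z) = snd (proj1_sig z') -> z = z'.
Proof.
  destruct z as [[x y] H], z' as [[x' y'] H']; simpl; intros -> ->; f_equal; apply proof_irrelevance.
Qed.

Lemma pb_prod {X Y B : CLS} (f : X -> B) (g : Y -> B) (Z : PB f g -> Prop) :
  closed (PB f g) Z -> exists U V, closed X U /\ closed Y V /\
    forall z, Z z <-> U (fst (proj1_sig z)) /\ V (snd (proj1_sig z)).
Proof.
  intro HZ.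
  exists (fun x => forall U, (exists V, closed X U /\ closed Y V /\
            (forall w, Z w -> U (fst (proj1_sig w)) /\ V (snd (proj1_sig w)))) -> U x).
  exists (fun y => forall V, (exists U, closed X U /\ closed Y V /\
            (forall w, Z w -> U (fst (proj1_sig w)) /\ V (snd (proj1_sig w)))) -> V y).
  split; [|split].
  - apply closed_inter. intros U [V [HU _]]; exact HU.
  - apply closed_inter. intros V [U [_ [HV _]]]; exact HV.
  - intro z; split.
    + intro Hz; split.
      * intros U [V [_ [_ H]]]. apply (H z Hz).
      * intros V [U [_ [_ H]]]. apply (H z Hz).
    + intros [H1 H2]. apply HZ. intros U V HU HV HS. split.
      * apply H1. exists V; auto.
      * apply H2. exists U; auto.
Qed.

Section Gen.
Context {E B : CLS} (p : hom E B).

Lemma L1 (Hc : closed_map p) {X : CLS} (al : X -> B) (Hal : continuous al)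
  (Z : PB p al -> Prop) : closed (PB p al) Z ->
  closed X (fun x => exists e (H : p e = al x), Z (pbpt p al e x H)).
Proof.
  intro HZ. destruct (pb_prod _ _ Z HZ) as [U [V [HU [HV HZe]]]].
  apply closed_ext with (fun x => V x /\ (fun b => exists e, U e /\ p e = b) (al x)).
  - intro x; split.
    + intros [Vx [e [Ue He]]]. exists e, He. apply HZe. simpl. auto.
    + intros [e [H Hz]]. apply HZe in Hz. simpl in Hz. destruct Hz. split; eauto.
  - apply closed_and; auto. apply (Hal (fun b => exists e, U e /\ p e = b)). apply Hc. auto.
Qed.

Lemma L2 (Ho : open_map p) (Hs : surjective p) {X : CLS} (al : X -> B)
  (Hal : continuous al) (Z : PB p al -> Prop) : closed (PB p al) Z ->
  closed X (fun x => forall e (H : p e = al x), Z (pbpt p al e x H)).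
Proof.
  intro HZ. destruct (pb_prod _ _ Z HZ) as [U [V [HU [HV HZe]]]].
  apply closed_ext with (fun x => V x /\ (fun b => ~ exists e, ~ U e /\ p e = b) (al x)).
  - intro x; split.
    + intros [Vx Hn] e H. apply HZe. simpl. split; auto.
      apply NNPP; intro HnU. apply Hn. exists e; auto.
    + intros Hall. destruct (Hs (al x)) as [e0 He0].
      split.
      * destruct (proj1 (HZe _) (Hall e0 He0)) as [_ Hv]. exact Hv.
      * intros [e [HnU He]]. apply HnU. destruct (proj1 (HZe _) (Hall e He)) as [Hu _]. exact Hu.
  - apply closed_and; auto. apply (Hal (fun b => ~ exists e, ~ U e /\ p e = b)). apply Ho.
    apply closed_ext with U; auto. intro e; split; [intros h hn; auto | apply NNPP].
Qed.

Lemma D0 (Hs : surjective p) (Hco : closed_map p \/ open_map p) {X : CLS}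
  (al : X -> B) (Hal : continuous al) (Q : X -> Prop) :
  closed (PB p al) (fun z => Q (snd (proj1_sig z))) -> closed X Q.
Proof.
  intro HQ. destruct Hco as [Hc | Ho].
  - apply closed_ext with (fun x => exists e (H : p e = al x), Q x).
    + intro x; split; [intros [e [H Hq]]; exact Hq|].
      intro Hq. destruct (Hs (al x)) as [e He]. exists e, He; exact Hq.
    + exact (L1 Hc al Hal _ HQ).
  - apply closed_ext with (fun x => forall e (H : p e = al x), Q x).
    + intro x; split; [|intros Hq e H; exact Hq].
      intro Hq. destruct (Hs (al x)) as [e He]. exact (Hq e He).
    + exact (L2 Ho Hs al Hal _ HQ).
Qed.

End Gen.
Section Desc.
Context {E B : CLS} (p : hom E B) (s : B -> E) (Hs : forall b, p (s b) = b)
  (Hco : closed_map p \/ open_map p).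

Local Notation pt D e c H := (pbpt p (fun c0 => p (dgam p D c0)) e c H).

Lemma surj : surjective p.
Proof. intro b; exists (s b); apply Hs. Qed.

Lemma xi_ext (D : DesObj p) e e' c c' H H' : e = e' -> c = c' ->
  dxi p D (pt D e c H) = dxi p D (pt D e' c' H').
Proof. intros; f_equal; apply pbpt_eq; auto. Qed.

Lemma ax2x (D : DesObj p) e c H : e = dgam p D c -> dxi p D (pt D e c H) = c.
Proof.
  intro He. rewrite <- (d_ax2 p D c) at 2. apply xi_ext; auto.
Qed.

Lemma ax3x (D : DesObj p) e' e c e'' c'' H H' H'' : e'' = e' -> c'' = c ->
  dxi p D (pt D e' (dxi p D (pt D e c H)) H') = dxi p D (pt D e'' c'' H'').
Proof.
  intros -> ->.
  assert (H1 : p e' = p e) by exact (eq_trans H' (f_equal p (d_ax1 p D (pt D e c H)))).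
  transitivity (dxi p D (pt D e' (dxi p D (pt D e c H))
    (eq_trans H1 (eq_sym (f_equal p (d_ax1 p D (pt D e c H))))))).
  { apply xi_ext; reflexivity. }
  rewrite (d_ax3 p D e' e c H1 H). apply xi_ext; reflexivity.
Qed.

Definition rH (D : DesObj p) (c : dC p D) : p (s (p (dgam p D c))) = p (dgam p D c) := Hs _.
Definition r0 (D : DesObj p) (c : dC p D) : dC p D :=
  dxi p D (pt D (s (p (dgam p D c))) c (rH D c)).
Lemma r0_gam D c : dgam p D (r0 D c) = s (p (dgam p D c)).
Proof. unfold r0. rewrite d_ax1. reflexivity. Qed.
Lemma r0_p D c : p (dgam p D (r0 D c)) = p (dgam p D c).
Proof. rewrite r0_gam. apply Hs. Qed.
Definition inA (D : DesObj p) (c : dC p D) : Prop := dgam p D c = s (p (dgam p D c)).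
Lemma r0_inA D c : inA D (r0 D c).
Proof. unfold inA. rewrite r0_p. apply r0_gam. Qed.
Definition Acar (D : DesObj p) := {c : dC p D | inA D c}.
Definition r (D : DesObj p) (c : dC p D) : Acar D := exist _ (r0 D c) (r0_inA D c).
Definition Aclosed (D : DesObj p) (T : Acar D -> Prop) : Prop :=
  closed (dC p D) (fun c => T (r D c)).

Lemma Aclosed_inter (D : DesObj p) : forall F : (Acar D -> Prop) -> Prop,
  (forall S, F S -> Aclosed D S) -> Aclosed D (fun x => forall S, F S -> S x).
Proof.
  intros F HF. unfold Aclosed.
  apply closed_ext with (fun c => forall S', (exists T, F T /\ S' = fun c => T (r D c)) -> S' c).
  - intro c; split.
    + intros H T FT. exact (H _ (ex_intro _ T (conj FT eq_refl))).
    + intros H S' [T [FT ->]]. exact (H T FT).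
  - apply closed_inter. intros S' [T [FT ->]]. exact (HF T FT).
Qed.

Definition Aobj (D : DesObj p) : CLS :=
  {| carrier := Acar D; closed := Aclosed D; closed_inter := Aclosed_inter D |}.

Definition alpha_fun (D : DesObj p) (a : Aobj D) : B := p (dgam p D (proj1_sig a)).

Lemma pg_cont (D : DesObj p) : continuous (fun c => p (dgam p D c)).
Proof. exact (cont_comp _ _ (hcont (dgam p D)) (hcont p)). Qed.

Lemma alpha_cont D : continuous (alpha_fun D).
Proof.
  intros S HS. simpl. unfold Aclosed, alpha_fun. simpl.
  apply closed_ext with (fun c => S (p (dgam p D c))).
  - intro c. rewrite r0_p. tauto.
  - exact (pg_cont D S HS).
Qed.

Definition Gobj (D : DesObj p) : SliceObj B :=
  {| sdom := Aobj D; smap := Hom (alpha_fun D) (alpha_cont D) |}.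

Section Gm.
Context (D D' : DesObj p) (f : DesHom p D D').
Lemma Gfun_in (a : Acar D) : inA D' (dh p D D' f (proj1_sig a)).
Proof. unfold inA. rewrite dh_gam. exact (proj2_sig a). Qed.
Definition Gfun (a : Aobj D) : Aobj D' := exist _ (dh p D D' f (proj1_sig a)) (Gfun_in a).
Lemma r_dh c : r D' (dh p D D' f c) = Gfun (r D c).
Proof.
  apply sig_eq. simpl. unfold r0. rewrite dh_xi. apply xi_ext; [|reflexivity].
  rewrite dh_gam. reflexivity.
Qed.
Lemma Gfun_cont : continuous Gfun.
Proof.
  intros T HT. simpl in *. unfold Aclosed in *.
  apply closed_ext with (fun c => T (r D' (dh p D D' f c))).
  - intro c. rewrite r_dh. tauto.
  - exact (hcont (dh p D D' f) _ HT).
Qed.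
Lemma Gfun_comm (a : Aobj D) : alpha_fun D' (Gfun a) = alpha_fun D a.
Proof. unfold alpha_fun. simpl. rewrite dh_gam. reflexivity. Qed.
Definition Gmor : SliceHom B (Gobj D) (Gobj D') :=
  @Build_SliceHom B (Gobj D) (Gobj D') (@Hom (Aobj D) (Aobj D') Gfun Gfun_cont) Gfun_comm.
End Gm.

Definition G : Functor (DesCat p) (SliceCat B) :=
  @Build_Functor (DesCat p) (SliceCat B) Gobj Gmor.

Lemma G_functor : is_functor G.
Proof.
  split; [|split].
  - intros a b f g Hfg x. apply sig_eq. simpl. apply Hfg.
  - intros a x. apply sig_eq. reflexivity.
  - intros a b c f g x. apply sig_eq. reflexivity.
Qed.

Lemma Kp_functor : is_functor (Kp p).
Proof.
  split; [|split].
  - intros a b f g Hfg x. simpl. unfold K_mor_fun. apply pbpt_eq; auto.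
  - intros a x. simpl. unfold K_mor_fun. apply pb_ext; reflexivity.
  - intros a b c f g x. simpl. unfold K_mor_fun. apply pbpt_eq; reflexivity.
Qed.
Section Unit.
Context (X : SliceObj B).
Let al := smap X.
Definition z0 (x : sdom X) : K_C p X := pbpt p (smap X) (s (smap X x)) x (Hs _).
Lemma z0_in x : inA (K_obj p X) (z0 x).
Proof. unfold inA. simpl. rewrite Hs. reflexivity. Qed.
Definition eta_fun (x : sdom X) : Aobj (K_obj p X) := exist _ (z0 x) (z0_in x).
Lemma r_K (z : K_C p X) : r (K_obj p X) z = eta_fun (snd (proj1_sig z)).
Proof.
  apply sig_eq. simpl. unfold r0. simpl. unfold K_xi_fun. simpl. unfold z0.
  apply pbpt_eq; [|reflexivity]. f_equal. exact (proj2_sig z).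
Qed.
Lemma eta_cont : continuous eta_fun.
Proof.
  intros T HT. simpl in HT. unfold Aclosed in HT.
  apply (D0 p surj Hco (smap X) (hcont (smap X)) (fun x => T (eta_fun x))).
  apply closed_ext with (fun z => T (r (K_obj p X) z)); [|exact HT].
  intro z. rewrite r_K. tauto.
Qed.
Lemma eta_comm (x : sdom X) : alpha_fun (K_obj p X) (eta_fun x) = smap X x.
Proof. unfold alpha_fun. simpl. apply Hs. Qed.
Definition eta : SliceHom B X (Gobj (K_obj p X)) :=
  @Build_SliceHom B X (Gobj (K_obj p X)) (@Hom (sdom X) (Aobj (K_obj p X)) eta_fun eta_cont) eta_comm.

Definition etai_fun (a : Aobj (K_obj p X)) : sdom X := snd (proj1_sig (proj1_sig a)).
Lemma etai_cont : continuous etai_fun.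
Proof.
  intros T HT. simpl. unfold Aclosed. unfold etai_fun. simpl.
  exact (cont_pi2 p (smap X) T HT).
Qed.
Lemma etai_comm (a : Aobj (K_obj p X)) : smap X (etai_fun a) = alpha_fun (K_obj p X) a.
Proof. unfold etai_fun, alpha_fun. simpl. exact (eq_sym (proj2_sig (proj1_sig a))). Qed.
Definition etai : SliceHom B (Gobj (K_obj p X)) X :=
  @Build_SliceHom B (Gobj (K_obj p X)) X (@Hom (Aobj (K_obj p X)) (sdom X) etai_fun etai_cont) etai_comm.
End Unit.

Section Counit.
Context (D : DesObj p).
Definition eps_fun (z : K_C p (Gobj D)) : dC p D :=
  dxi p D (pt D (fst (proj1_sig z)) (proj1_sig (snd (proj1_sig z))) (proj2_sig z)).

Lemma xi_r0 e c H H' : dxi p D (pt D e (r0 D c) H) = dxi p D (pt D e c H').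
Proof. unfold r0. apply ax3x; reflexivity. Qed.

Lemma eps_cont : continuous eps_fun.
Proof.
  intros S HS. simpl. intros z Hz. apply NNPP; intro HnS.
  pose (W := fun w : EC p (dgam p D) => S (dxi p D w)).
  assert (HW : closed (EC p (dgam p D)) W) by exact (hcont (dxi p D) S HS).
  destruct (pb_prod _ _ W HW) as [U [V [HU [HV HWe]]]].
  set (e0 := fst (proj1_sig z)) in *. set (a0 := snd (proj1_sig z)) in *.
  assert (Hn0 : ~ (U e0 /\ V (proj1_sig a0))).
  { intro HH. apply HnS. unfold eps_fun. apply (proj2 (HWe _)). simpl. exact HH. }
  destruct Hco as [Hc | Ho].
  - pose (V' := fun a : Aobj D => exists e (H : p e = p (dgam p D (proj1_sig a))),
                 S (dxi p D (pt D e (proj1_sig a) H))).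
    assert (HV' : closed (Aobj D) V').
    { simpl. unfold Aclosed, V'. simpl.
      apply closed_ext with (fun c => exists e (H : p e = p (dgam p D c)), W (pt D e c H)).
      - intro c; split.
        + intros [e [H Hw]]. exists e, (eq_trans H (eq_sym (r0_p D c))).
          unfold W in Hw. rewrite (xi_r0 _ _ _ H). exact Hw.
        + intros [e [H Hw]]. exists e, (eq_trans H (r0_p D c)).
          unfold W. rewrite <- (xi_r0 _ _ H). exact Hw.
      - exact (L1 p Hc _ (pg_cont D) W HW). }
    destruct (Hz U V' HU HV') as [HU0 HV0].
    + intros w Hw. split.
      * exact (proj1 (proj1 (HWe _) Hw)).
      * exists (fst (proj1_sig w)), (proj2_sig w). exact Hw.
    + destruct HV0 as [e [H Hs0]]. apply Hn0. split; [exact HU0|].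
      exact (proj2 (proj1 (HWe _) Hs0)).
  - destruct (classic (U e0)) as [HU0 | HnU0].
    + assert (HnV : ~ V (proj1_sig a0)) by (intro; apply Hn0; auto).
      pose (V'' := fun a : Aobj D => forall e (H : p e = p (dgam p D (proj1_sig a))),
                 V (dxi p D (pt D e (proj1_sig a) H))).
      assert (HV'' : closed (Aobj D) V'').
      { simpl. unfold Aclosed, V''. simpl.
        apply closed_ext with (fun c => forall e (H : p e = p (dgam p D c)), V (dxi p D (pt D e c H))).
        - intro c; split.
          + intros Hall e H. rewrite (xi_r0 _ _ _ (eq_trans H (r0_p D c))). apply Hall.
          + intros Hall e H. rewrite <- (xi_r0 _ _ (eq_trans H (eq_sym (r0_p D c)))). apply Hall.
        - exact (L2 p Ho surj _ (pg_cont D) (fun w => V (dxi p D w)) (hcont (dxi p D) V HV)). }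
      assert (HT : closed E (fun _ : E => True)).
      { apply closed_ext with (fun x => forall S : E -> Prop, False -> S x).
        - intro; split; auto. intros _ S0 [].
        - apply full_closed. }
      destruct (Hz (fun _ => True) V'' HT HV'') as [_ HV0].
      * intros w Hw. split; [exact I|]. intros e H.
        assert (H1 : p (fst (proj1_sig w)) = p (dgam p D (dxi p D (pt D e (proj1_sig (snd (proj1_sig w))) H)))).
        { rewrite d_ax1. simpl. exact (eq_trans (proj2_sig w) (eq_sym H)). }
        refine (proj2 (proj1 (HWe (pt D (fst (proj1_sig w)) _ H1)) _)).
        unfold W. rewrite (ax3x D _ _ _ (fst (proj1_sig w)) (proj1_sig (snd (proj1_sig w))) _ _ (proj2_sig w)); auto.
      * apply HnV. rewrite <- (ax2x D (dgam p D (proj1_sig a0)) (proj1_sig a0) eq_refl eq_refl).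
        apply HV0.
    + assert (HT : closed (Aobj D) (fun _ => True)).
      { simpl. unfold Aclosed. apply closed_ext with (fun x => forall S : dC p D -> Prop, False -> S x).
        - intro; split; auto. intros _ S0 [].
        - apply full_closed. }
      destruct (Hz U (fun _ => True) HU HT) as [HU0 _].
      * intros w Hw. split; [exact (proj1 (proj1 (HWe _) Hw)) | exact I].
      * exact (HnU0 HU0).
Qed.
End Counit.
Section Counit2.
Context (D : DesObj p).
Lemma eps_gam (z : K_C p (Gobj D)) : dgam p D (eps_fun D z) = dgam p (K_obj p (Gobj D)) z.
Proof. unfold eps_fun. rewrite d_ax1. reflexivity. Qed.
Lemma eps_xi : forall (e : E) (z : K_C p (Gobj D)) (H : p e = p (dgam p (K_obj p (Gobj D)) z)),
  @Hom _ _ (eps_fun D) (eps_cont D) (dxi p (K_obj p (Gobj D)) (pt (K_obj p (Gobj D)) e z H))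
  = dxi p D (pt D e (@Hom _ _ (eps_fun D) (eps_cont D) z)
        (eq_trans H (eq_sym (f_equal p (eps_gam z))))).
Proof.
  intros. simpl. unfold eps_fun, K_xi_fun. simpl. symmetry. apply ax3x; reflexivity.
Qed.
Definition eps : DesHom p (K_obj p (Gobj D)) D :=
  @Build_DesHom E B p (K_obj p (Gobj D)) D (@Hom _ _ (eps_fun D) (eps_cont D)) eps_gam eps_xi.

Definition epsi_fun (c : dC p D) : K_C p (Gobj D) :=
  pbpt p (smap (Gobj D)) (dgam p D c) (r D c) (eq_sym (r0_p D c)).
Lemma epsi_cont : continuous epsi_fun.
Proof.
  apply pb_pair_cont.
  - exact (hcont (dgam p D)).
  - intros T HT. exact HT.
Qed.
Lemma epsi_gam c : dgam p (K_obj p (Gobj D)) (epsi_fun c) = dgam p D c.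
Proof. reflexivity. Qed.
Lemma r0_xi e c H : r0 D (dxi p D (pt D e c H)) = r0 D c.
Proof.
  unfold r0. apply ax3x; [|reflexivity]. rewrite d_ax1. simpl. rewrite H. reflexivity.
Qed.
Lemma epsi_xi : forall (e : E) (c : dC p D) (H : p e = p (dgam p D c)),
  @Hom _ _ epsi_fun epsi_cont (dxi p D (pt D e c H))
  = dxi p (K_obj p (Gobj D)) (pt (K_obj p (Gobj D)) e (@Hom _ _ epsi_fun epsi_cont c)
        (eq_trans H (eq_sym (f_equal p (epsi_gam c))))).
Proof.
  intros. simpl. unfold epsi_fun, K_xi_fun. apply pb_ext; simpl.
  - apply d_ax1.
  - apply sig_eq. simpl. apply r0_xi.
Qed.
Definition epsi : DesHom p D (K_obj p (Gobj D)) :=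
  @Build_DesHom E B p D (K_obj p (Gobj D)) (@Hom _ _ epsi_fun epsi_cont) epsi_gam epsi_xi.

Lemma r0_id c : inA D c -> r0 D c = c.
Proof. intro Ha. unfold r0. apply ax2x. exact (eq_sym Ha). Qed.
End Counit2.

Theorem main_equiv : is_equivalence (Kp p).
Proof.
  split; [exact Kp_functor|].
  exists G. split; [exact G_functor|]. split.
  - exists eta, etai. split; [|split].
    + intros X x. reflexivity.
    + intros X a. simpl. apply sig_eq. destruct a as [[[e x] H] Ha]. simpl.
      unfold z0. apply pb_ext; simpl; [|reflexivity].
      unfold inA in Ha. simpl in Ha, H. unfold etai_fun; simpl. rewrite <- H. exact (eq_sym Ha).
    + intros X Y f x. simpl. apply sig_eq. simpl. unfold K_mor_fun, z0. simpl.
      apply pb_ext; simpl; [|reflexivity]. rewrite (scomm f). reflexivity.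
  - exists eps, epsi. split; [|split].
    + intros D z. simpl. unfold epsi_fun, eps_fun. apply pb_ext; simpl.
      * apply d_ax1.
      * apply sig_eq. simpl. rewrite r0_xi. apply r0_id. exact (proj2_sig _).
    + intros D c. simpl. unfold epsi_fun, eps_fun. simpl. unfold r0.
      rewrite (ax3x D _ _ _ (dgam p D c) c _ _ eq_refl); auto. apply ax2x; reflexivity.
    + intros D D' g z. simpl. unfold eps_fun, K_mor_fun. simpl. rewrite dh_xi.
      apply xi_ext; reflexivity.
Qed.
End Desc.

Theorem theorem6p5 :
  forall (E B : CLS) (p : hom E B),
    surjective p -> (closed_map p \/ open_map p) -> effective_descent p.
Proof.
  intros E B p Hs Hco.
  pose (s := fun b => proj1_sig (constructive_indefinite_description _ (Hs b))).
  assert (Hsec : forall b, p (s b) = b) by (intro b; exact (proj2_sig (constructive_indefinite_description _ (Hs b)))).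
  exact (main_equiv p s Hsec Hco).
Qed.
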